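(* Let $\Sigma=(\mathcal F_\Sigma;\mathcal P_\Sigma)$ be a discrete signature and $\varphi$ a formula over $\Sigma$. Then one can compute the following data: <ul> <li>natural numbers $n,m$;</li> <li>a signature $\Sigma_{n,m}=(\mathrm{Fin}\,n;\mathrm{Fin}\,m)$;</li> <li>arity-preserving maps $\mathrm{Fin}\,n\to\mathcal F_\Sigma$ and $\mathrm{Fin}\,m\to\mathcal P_\Sigma$;</li> <li>a formula $\psi$ over $\Sigma_{n,m}$.</li> </ul> These satisfy $\mathsf{FSAT}(\Sigma)\,\varphi\leftrightarrow\mathsf{FSAT}(\Sigma_{n,m})\,\psi$.
   Context: We work in constructive type theory, where ''one can compute'' means the data is constructed (in $\mathsf{Type}$). A signature consists of a type of function symbols and a type of relation symbols, each with an arity. It is discrete if both types have decidable equality. $\mathrm{Fin}\,k$ is the finite type $\{0,\dots,k-1\}$. A map between symbol types is arity preserving if each symbol has the same arity as its image. A type is finite if some list contains all of its elements. Formulas are first-order formulas built from $\dot\bot$, atoms, $\dot\to,\dot\land,\dot\lor,\dot\forall,\dot\exists$. A model over a domain $D$ interprets function symbols as functions $D^{|f|}\to D$ and relation symbols as predicates $D^{|P|}\to\mathbb P$, with Tarski satisfaction. The model is decidable if every relation interpretation is decidable. $\mathsf{FSAT}(\Sigma)\,\varphi$ holds iff some finite type $D$, decidable model over $D$ and assignment $\rho$ satisfy $\varphi$. *)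

(* Defs.v *)
From Stdlib Require Import List Vector Fin.

Set Implicit Arguments.

Record signature : Type := Signature {
  syms : Type;
  ar_syms : syms -> nat;
  rels : Type;
  ar_rels : rels -> nat
}.

Definition discrete (Σ : signature) : Type :=
  ((forall x y : syms Σ, {x = y} + {x <> y}) *
   (forall x y : rels Σ, {x = y} + {x <> y}))%type.

Definition sig_fin (n m : nat) (af : Fin.t n -> nat) (ap : Fin.t m -> nat)
  : signature := Signature af ap.

Section Syntax.
Variable Σ : signature.

(* terms with de Bruijn variables *)
Inductive term : Type :=
  | var : nat -> term
  | func : forall f : syms Σ, Vector.t term (ar_syms Σ f) -> term.

Inductive form : Type :=
  | fal : form
  | atom : forall P : rels Σ, Vector.t term (ar_rels Σ P) -> form
  | imp : form -> form -> form
  | conj : form -> form -> form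
  | disj : form -> form -> form
  | all : form -> form
  | ex : form -> form.

Record model (D : Type) : Type := Model {
  fun_i : forall f : syms Σ, Vector.t D (ar_syms Σ f) -> D;
  rel_i : forall P : rels Σ, Vector.t D (ar_rels Σ P) -> Prop
}.

Definition model_dec (D : Type) (M : model D) : Type :=
  forall (P : rels Σ) (v : Vector.t D (ar_rels Σ P)), {rel_i M P v} + {~ rel_i M P v}.

Definition scons (D : Type) (d : D) (rho : nat -> D) : nat -> D :=
  fun k => match k with O => d | S k => rho k end.

Fixpoint eval (D : Type) (M : model D) (rho : nat -> D) (t : term) : D :=
  match t with
  | var k => rho k
  | func f v => fun_i M f (Vector.map (eval M rho) v)
  end.

Fixpoint sat (D : Type) (M : model D) (rho : nat -> D) (phi : form) : Prop :=
  match phi with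
  | fal => False
  | atom P v => rel_i M P (Vector.map (eval M rho) v)
  | imp a b => sat M rho a -> sat M rho b
  | conj a b => sat M rho a /\ sat M rho b
  | disj a b => sat M rho a \/ sat M rho b
  | all a => forall d : D, sat M (scons d rho) a
  | ex a => exists d : D, sat M (scons d rho) a
  end.

Definition finite (D : Type) : Prop := exists l : list D, forall x : D, List.In x l.

Definition FSAT (phi : form) : Prop :=
  exists (D : Type) (M : model D), finite D /\ inhabited (model_dec M) /\
    exists rho : nat -> D, sat M rho phi.

End Syntax.

(* Main.v *)
Require Import Defs.
From Stdlib Require Import List Vector Fin.
Set Implicit Arguments.

Fixpoint VAll {X : Type} (P : X -> Prop) {n} (v : Vector.t X n) : Prop :=
  match v with
  | Vector.nil _ => True
  | Vector.cons _ x _ w => P x /\ VAll P w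
  end.

Fixpoint vconcat {X Y : Type} (g : X -> list Y) {n} (v : Vector.t X n) : list Y :=
  match v with
  | Vector.nil _ => List.nil
  | Vector.cons _ x _ w => g x ++ vconcat g w
  end.

Lemma vmap_ext_all {X Y Z : Type} (L : list Z) (g : X -> list Z) (f h : X -> Y) n
  (v : Vector.t X n) :
  VAll (fun t => incl (g t) L -> f t = h t) v -> incl (vconcat g v) L ->
  Vector.map f v = Vector.map h v.
Proof.
  induction v as [|x k w IH]; simpl; intros H1 H2; [reflexivity|].
  destruct H1 as [Hx Hw].
  rewrite Hx, IH; auto.
  - intros a Ha; apply H2; apply in_or_app; right; auto.
  - intros a Ha; apply H2; apply in_or_app; left; auto.
Qed.

Lemma vmap_map {X Y Z : Type} (f : X -> Y) (g : Y -> Z) n (v : Vector.t X n) :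
  Vector.map g (Vector.map f v) = Vector.map (fun x => g (f x)) v.
Proof. induction v; simpl; congruence. Qed.

Definition castv {A X : Type} (ar : A -> nat) {a b : A} (e : a = b)
  : Vector.t X (ar b) -> Vector.t X (ar a) :=
  match e in _ = b' return Vector.t X (ar b') -> Vector.t X (ar a) with
  | eq_refl => fun v => v
  end.

Section Find.
Variable A : Type.
Variable dec : forall x y : A, {x = y} + {x <> y}.

Fixpoint lnth (l : list A) : Fin.t (length l) -> A :=
  match l return Fin.t (length l) -> A with
  | List.nil => fun i => Fin.case0 (fun _ => A) i
  | x :: l' => fun i => Fin.caseS' i (fun _ => A) x (lnth l')
  end.

Fixpoint lfind (l : list A) (a : A) : option {i : Fin.t (length l) | lnth l i = a} :=
  match l return option {i : Fin.t (length l) | lnth l i = a} with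
  | List.nil => None
  | x :: l' =>
    match dec x a with
    | left e => Some (exist _ Fin.F1 e)
    | right _ =>
      match lfind l' a with
      | Some (exist _ i e) => Some (exist (fun i => lnth (x :: l') i = a) (Fin.FS i) e)
      | None => None
      end
    end
  end.

Lemma lfind_in l a : List.In a l -> lfind l a <> None.
Proof.
  induction l as [|x l IH]; simpl; [tauto|].
  intros H. destruct (dec x a) as [e|ne]; [discriminate|].
  destruct H as [H|H]; [congruence|].
  specialize (IH H). destruct (lfind l a) as [[i e]|]; [discriminate|congruence].
Qed.
End Find.
Arguments lnth {A} l _.
Arguments lfind {A} dec l a.
Arguments lfind_in {A} dec l a _ _.

Section Trans.
Variable Σ : signature.
Variable HΣ : discrete Σ.

Fixpoint fsyms (t : term Σ) : list (syms Σ) :=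
  match t with
  | var _ _ => List.nil
  | @func _ f v => f :: vconcat fsyms v
  end.

Fixpoint fsymsF (φ : form Σ) : list (syms Σ) :=
  match φ with
  | fal _ => List.nil
  | @atom _ P v => vconcat fsyms v
  | @imp _ a b | @conj _ a b | @disj _ a b => fsymsF a ++ fsymsF b
  | @all _ a | @ex _ a => fsymsF a
  end.

Fixpoint psymsF (φ : form Σ) : list (rels Σ) :=
  match φ with
  | fal _ => List.nil
  | @atom _ P v => P :: List.nil
  | @imp _ a b | @conj _ a b | @disj _ a b => psymsF a ++ psymsF b
  | @all _ a | @ex _ a => psymsF a
  end.

Fixpoint term_ind' (P : term Σ -> Prop) (Hv : forall k, P (var _ k))
  (Hf : forall f v, VAll P v -> P (func f v)) (t : term Σ) : P t :=
  match t with
  | var _ k => Hv k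
  | @func _ f v => Hf f v ((fix aux n (w : Vector.t (term Σ) n) : VAll P w :=
       match w as w0 return VAll P w0 with
       | Vector.nil _ => I
       | Vector.cons _ x _ w' => Logic.conj (term_ind' P Hv Hf x) (aux _ w')
       end) _ v)
  end.

Variable Lf : list (syms Σ).
Variable Lp : list (rels Σ).

Definition afs : Fin.t (length Lf) -> nat := fun i => ar_syms Σ (lnth Lf i).
Definition aps : Fin.t (length Lp) -> nat := fun j => ar_rels Σ (lnth Lp j).
Definition Σ' := sig_fin afs aps.

Definition decf := fst HΣ.
Definition decp := snd HΣ.

Fixpoint tt (t : term Σ) : term Σ' :=
  match t with
  | var _ k => var _ k
  | @func _ f v =>
    match lfind decf Lf f with
    | Some (exist _ i e) => func (Σ := Σ') i (castv (ar_syms Σ) e (Vector.map tt v))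
    | None => var _ 0
    end
  end.

Fixpoint tf (φ : form Σ) : form Σ' :=
  match φ with
  | fal _ => fal _
  | @atom _ P v =>
    match lfind decp Lp P with
    | Some (exist _ j e) => atom (Σ := Σ') j (castv (ar_rels Σ) e (Vector.map tt v))
    | None => fal _
    end
  | @imp _ a b => imp (tf a) (tf b)
  | @conj _ a b => conj (tf a) (tf b)
  | @disj _ a b => disj (tf a) (tf b)
  | @all _ a => all (tf a)
  | @ex _ a => ex (tf a)
  end.

Definition fwdM D (M : model Σ D) : model Σ' D :=
  @Model Σ' D (fun i v => fun_i M (lnth Lf i) v) (fun j v => rel_i M (lnth Lp j) v).

Lemma fwd_eval D (M : model Σ D) rho t :
  incl (fsyms t) Lf -> eval (fwdM M) rho (tt t) = eval M rho t.
Proof.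
  induction t as [k|f v IH] using term_ind'; simpl; [reflexivity|].
  intros Hi.
  pose proof (lfind_in decf Lf f (Hi f (or_introl eq_refl))) as Hn.
  destruct (lfind decf Lf f) as [[i e]|]; [|congruence].
  subst f. simpl. rewrite vmap_map. f_equal.
  apply (vmap_ext_all (L:=Lf) fsyms); auto.
  intros a Ha; apply Hi; right; auto.
Qed.

Lemma fwd_sat D (M : model Σ D) φ rho :
  incl (fsymsF φ) Lf -> incl (psymsF φ) Lp ->
  (sat (fwdM M) rho (tf φ) <-> sat M rho φ).
Proof.
  revert rho; induction φ as [|P v|a IHa b IHb|a IHa b IHb|a IHa b IHb|a IHa|a IHa];
    intros rho Hf Hp; simpl in *.
  - tauto.
  - pose proof (lfind_in decp Lp P (Hp P (or_introl eq_refl))) as Hn.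
    destruct (lfind decp Lp P) as [[j e]|]; [|congruence].
    subst P. simpl. rewrite vmap_map.
    erewrite (vmap_ext_all (L:=Lf) fsyms); [reflexivity| |exact Hf].
    clear. induction v; simpl; [exact I|]. split; auto. intros; apply fwd_eval; auto.
  - assert (incl (fsymsF a) Lf) by (intros x Hx; apply Hf, in_or_app; auto).
    assert (incl (fsymsF b) Lf) by (intros x Hx; apply Hf, in_or_app; auto).
    assert (incl (psymsF a) Lp) by (intros x Hx; apply Hp, in_or_app; auto).
    assert (incl (psymsF b) Lp) by (intros x Hx; apply Hp, in_or_app; auto).
    rewrite IHa, IHb by auto. tauto.
  - assert (incl (fsymsF a) Lf) by (intros x Hx; apply Hf, in_or_app; auto).
    assert (incl (fsymsF b) Lf) by (intros x Hx; apply Hf, in_or_app; auto).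
    assert (incl (psymsF a) Lp) by (intros x Hx; apply Hp, in_or_app; auto).
    assert (incl (psymsF b) Lp) by (intros x Hx; apply Hp, in_or_app; auto).
    rewrite IHa, IHb by auto. tauto.
  - assert (incl (fsymsF a) Lf) by (intros x Hx; apply Hf, in_or_app; auto).
    assert (incl (fsymsF b) Lf) by (intros x Hx; apply Hf, in_or_app; auto).
    assert (incl (psymsF a) Lp) by (intros x Hx; apply Hp, in_or_app; auto).
    assert (incl (psymsF b) Lp) by (intros x Hx; apply Hp, in_or_app; auto).
    rewrite IHa, IHb by auto. tauto.
  - split; intros H d; apply (IHa (scons d rho)); auto.
  - split; intros [d H]; exists d; apply (IHa (scons d rho)); auto.
Qed.

Definition bwdM D (d : D) (M : model Σ' D) : model Σ D :=
  @Model Σ D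
    (fun f v => match lfind decf Lf f with
                | Some (exist _ i e) => fun_i M i (castv (ar_syms Σ) e v)
                | None => d end)
    (fun P v => match lfind decp Lp P with
                | Some (exist _ j e) => rel_i M j (castv (ar_rels Σ) e v)
                | None => False end).

Lemma bwd_dec D d (M : model Σ' D) : model_dec M -> model_dec (bwdM d M).
Proof.
  intros X P v. simpl. destruct (lfind decp Lp P) as [[j e]|].
  - apply X.
  - right; tauto.
Qed.

Lemma bwd_eval D d (M : model Σ' D) rho t :
  incl (fsyms t) Lf -> eval M rho (tt t) = eval (bwdM d M) rho t.
Proof.
  induction t as [k|f v IH] using term_ind'; simpl; [reflexivity|].
  intros Hi.
  pose proof (lfind_in decf Lf f (Hi f (or_introl eq_refl))) as Hn.
  destruct (lfind decf Lf f) as [[i e]|]; [|congruence].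
  subst f. simpl. rewrite vmap_map. f_equal.
  apply (vmap_ext_all (L:=Lf) fsyms); auto.
  intros a Ha; apply Hi; right; auto.
Qed.

Lemma bwd_sat D d (M : model Σ' D) φ rho :
  incl (fsymsF φ) Lf -> incl (psymsF φ) Lp ->
  (sat M rho (tf φ) <-> sat (bwdM d M) rho φ).
Proof.
  revert rho; induction φ as [|P v|a IHa b IHb|a IHa b IHb|a IHa b IHb|a IHa|a IHa];
    intros rho Hf Hp; simpl in *.
  - tauto.
  - pose proof (lfind_in decp Lp P (Hp P (or_introl eq_refl))) as Hn.
    destruct (lfind decp Lp P) as [[j e]|]; [|congruence].
    subst P. simpl. rewrite vmap_map.
    erewrite (vmap_ext_all (L:=Lf) fsyms); [reflexivity| |exact Hf].
    clear. induction v; simpl; [exact I|]. split; auto. intros; apply bwd_eval; auto.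
  - assert (incl (fsymsF a) Lf) by (intros x Hx; apply Hf, in_or_app; auto).
    assert (incl (fsymsF b) Lf) by (intros x Hx; apply Hf, in_or_app; auto).
    assert (incl (psymsF a) Lp) by (intros x Hx; apply Hp, in_or_app; auto).
    assert (incl (psymsF b) Lp) by (intros x Hx; apply Hp, in_or_app; auto).
    rewrite IHa, IHb by auto. tauto.
  - assert (incl (fsymsF a) Lf) by (intros x Hx; apply Hf, in_or_app; auto).
    assert (incl (fsymsF b) Lf) by (intros x Hx; apply Hf, in_or_app; auto).
    assert (incl (psymsF a) Lp) by (intros x Hx; apply Hp, in_or_app; auto).
    assert (incl (psymsF b) Lp) by (intros x Hx; apply Hp, in_or_app; auto).
    rewrite IHa, IHb by auto. tauto.
  - assert (incl (fsymsF a) Lf) by (intros x Hx; apply Hf, in_or_app; auto).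
    assert (incl (fsymsF b) Lf) by (intros x Hx; apply Hf, in_or_app; auto).
    assert (incl (psymsF a) Lp) by (intros x Hx; apply Hp, in_or_app; auto).
    assert (incl (psymsF b) Lp) by (intros x Hx; apply Hp, in_or_app; auto).
    rewrite IHa, IHb by auto. tauto.
  - split; intros H e; apply (IHa (scons e rho)); auto.
  - split; intros [e H]; exists e; apply (IHa (scons e rho)); auto.
Qed.

Lemma trans_correct φ :
  incl (fsymsF φ) Lf -> incl (psymsF φ) Lp -> (FSAT φ <-> FSAT (tf φ)).
Proof.
  intros Hf Hp. split.
  - intros (D & M & Hfin & [X] & rho & H).
    exists D, (fwdM M). split; [exact Hfin|]. split.
    + constructor. intros j v. apply X.
    + exists rho. apply fwd_sat; auto.
  - intros (D & M & Hfin & [X] & rho & H).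
    exists D, (bwdM (rho 0) M). split; [exact Hfin|]. split.
    + constructor. apply bwd_dec, X.
    + exists rho. apply bwd_sat; auto.
Qed.
End Trans.

Theorem lemma22 (Σ : signature) (HΣ : discrete Σ) (φ : form Σ) :
  { n : nat & { m : nat &
  { af : Fin.t n -> nat & { ap : Fin.t m -> nat &
  { fs : Fin.t n -> syms Σ & { ps : Fin.t m -> rels Σ &
  { ψ : form (sig_fin af ap) |
      (forall i : Fin.t n, af i = ar_syms Σ (fs i)) /\
      (forall j : Fin.t m, ap j = ar_rels Σ (ps j)) /\
      (FSAT φ <-> FSAT ψ) } } } } } } }.
Proof.
  exists _, _, _, _, (lnth (fsymsF φ)), (lnth (psymsF φ)), (tf HΣ (fsymsF φ) (psymsF φ) φ).
  split; [intros; reflexivity|]. split; [intros; reflexivity|].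
  apply trans_correct; apply incl_refl.
Qed.
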